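(* Let $r\neq0$ be an integer and $K$ a field of characteristic not dividing $2r$ and different from $3$, and assume $r=\varepsilon^4$ for some $\varepsilon\in K$. Let $E_r$ be the elliptic curve $y^2=x^3-r^{-1}x$ with point at infinity $O$, and define $S_0=\{(a,b)\in K^2: b^2=a^3-a,\ a^4+6a^2-3=0\}$, $S_1=\{(a,b)\in K^2: b^2=a^3-a,\ 3a^4-6a^2-1=0\}$, $S_{1,r}=\{(a,b)\in K^2: b^2=a^3-r^{-1}a,\ 3r^2a^4-6ra^2-1=0\}$. Then there exist bijections $E_r[3](K)\setminus\{O\}\to S_{1,r}\to S_1\to S_0$, where $E_r[3](K)$ is the set of $K$-rational $3$-torsion points of $E_r$. *)

(* Defs.v *)
From HB Require Import structures.
From mathcomp Require Import all_boot all_order all_algebra.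
Set Implicit Arguments. Unset Strict Implicit. Unset Printing Implicit Defensive.
Import Order.TTheory GRing.Theory Num.Theory.
Local Open Scope ring_scope.

Section EC.
Variable K : fieldType.

(* Points of y^2 = x^3 + A x:  None is the point at infinity O,
   Some (x, y) an affine point. *)
Definition on_curve (A : K) (p : K * K) : bool :=
  p.2 ^+ 2 == p.1 ^+ 3 + A * p.1.

Definition ec_add (A : K) (P Q : option (K * K)) : option (K * K) :=
  match P, Q with
  | None, _ => Q
  | _, None => P
  | Some (x1, y1), Some (x2, y2) =>
      if x1 == x2 then
        if y1 == - y2 then None
        else
          let l := (3%:R * x1 ^+ 2 + A) / (2%:R * y1) in
          let x3 := l ^+ 2 - x1 - x2 in
          Some (x3, l * (x1 - x3) - y1)
      else
        let l := (y2 - y1) / (x2 - x1) in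
        let x3 := l ^+ 2 - x1 - x2 in
        Some (x3, l * (x1 - x3) - y1)
  end.

Definition Ar (r : int) : K := - (r%:~R)^-1.

(* E_r[3](K) \ {O}: affine K-points P of E_r with 3P = O. *)
Definition E3 (r : int) :=
  {p : K * K | on_curve (Ar r) p &&
     (ec_add (Ar r) (Some p) (ec_add (Ar r) (Some p) (Some p)) == None)}.

Definition S0 :=
  {p : K * K | (p.2 ^+ 2 == p.1 ^+ 3 - p.1) &&
               (p.1 ^+ 4 + 6%:R * p.1 ^+ 2 - 3%:R == 0)}.

Definition S1 :=
  {p : K * K | (p.2 ^+ 2 == p.1 ^+ 3 - p.1) &&
               (3%:R * p.1 ^+ 4 - 6%:R * p.1 ^+ 2 - 1 == 0)}.

Definition S1r (r : int) :=
  {p : K * K | (p.2 ^+ 2 == p.1 ^+ 3 - (r%:~R)^-1 * p.1) &&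
     (3%:R * (r%:~R) ^+ 2 * p.1 ^+ 4 - 6%:R * r%:~R * p.1 ^+ 2 - 1 == 0)}.

End EC.

(* Main.v *)
Require Import Defs.
From HB Require Import structures.
From mathcomp Require Import all_boot all_order all_algebra.
From mathcomp Require Import ring.
Import Order.TTheory GRing.Theory Num.Theory.
Local Open Scope ring_scope.

Section Aux.
Variable K : fieldType.

Lemma core3 (A x y : K) : (2%:R : K) != 0 -> A != 0 ->
  (on_curve A (x, y) &&
   (ec_add A (Some (x, y)) (ec_add A (Some (x, y)) (Some (x, y))) == None))
  = (y ^+ 2 == x ^+ 3 + A * x) &&
    (3%:R * x ^+ 4 + 6%:R * A * x ^+ 2 - A ^+ 2 == 0).
Proof.
move=> h2 hA; rewrite /on_curve /=.
case: (boolP (y ^+ 2 == x ^+ 3 + A * x)) => //= /eqP Hc.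
rewrite eqxx.
case: (boolP (y == - y)) => [/eqP Hy|Hy].
  have y0 : y = 0.
    have : 2%:R * y = 0 by rewrite mulr_natl mulr2n {1}Hy addNr.
    by move/eqP; rewrite mulf_eq0 (negbTE h2) /= => /eqP.
  rewrite /=; symmetry; apply/negbTE/negP => /eqP H.
  move: Hc; rewrite y0 expr0n /= => /esym/eqP.
  have -> : x ^+ 3 + A * x = x * (x ^+ 2 + A) by ring.
  rewrite mulf_eq0 => /orP [/eqP x0|].
    by move: H; rewrite x0 !expr0n /= !mulr0 !add0r => /eqP; rewrite oppr_eq0 expf_eq0 (negbTE hA) andbF.
  move=> hx0; have hx : x ^+ 2 = - A by apply/eqP; rewrite -addr_eq0.
  have : 3%:R * x ^+ 4 + 6%:R * A * x ^+ 2 - A ^+ 2 = - (4%:R * A ^+ 2).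
    have -> : x ^+ 4 = (x ^+ 2) ^+ 2 by rewrite -exprM.
    rewrite hx; ring.
  rewrite H => /eqP; rewrite eq_sym oppr_eq0 mulf_eq0 expf_eq0 (negbTE hA) /= orbF.
  have -> : (4%:R : K) = 2%:R * 2%:R by rewrite -natrM.
  by rewrite mulf_eq0 (negbTE h2).
have y0 : y != 0.
  apply: contra Hy => /eqP ->; by rewrite oppr0.
rewrite /=.
have h4n : (4%:R : K) != 0 by rewrite -[4%N]/(2*2)%N natrM mulf_neq0.
set l := (3%:R * x ^+ 2 + A) / (2%:R * y).
have key : l ^+ 2 - x - x - x = - (3%:R * x ^+ 4 + 6%:R * A * x ^+ 2 - A ^+ 2) / (4%:R * y ^+ 2).
  have e1 : l ^+ 2 - x - x - x = ((3%:R * x ^+ 2 + A) ^+ 2 - 12%:R * x * y ^+ 2) / (4%:R * y ^+ 2).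
    rewrite /l. field; by rewrite y0 h2 h4n.
  rewrite e1; congr (_ / _); rewrite Hc; ring.
have h4 : (4%:R : K) * y ^+ 2 != 0.
  by rewrite mulf_neq0 // expf_neq0.
case: (x =P l ^+ 2 - x - x) => [Hx|Hx].
  rewrite -Hx subrr mulr0 sub0r opprK eqxx /=.
  apply/esym/eqP.
  have : l ^+ 2 - x - x - x = 0 by rewrite -Hx subrr.
  rewrite key => /eqP; rewrite mulf_eq0 invr_eq0 (negbTE h4) orbF oppr_eq0.
  by move/eqP.
rewrite /=; apply/esym/negP => /eqP H; apply: Hx.
apply/eqP; rewrite eq_sym -subr_eq0; apply/eqP.
by rewrite key H oppr0 mul0r.
Qed.


Variables (r : int) (eps : K).
Hypothesis hre : (r%:~R : K) = eps ^+ 4.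
Hypothesis heps : eps != 0.
Hypothesis h2 : (2%:R : K) != 0.
Hypothesis h3 : (3%:R : K) != 0.

Lemma hr0 : (r%:~R : K) != 0.
Proof. by rewrite hre expf_neq0. Qed.

Lemma bridge (p : K * K) :
  (on_curve (Ar K r) p &&
     (ec_add (Ar K r) (Some p) (ec_add (Ar K r) (Some p) (Some p)) == None)) =
  ((p.2 ^+ 2 == p.1 ^+ 3 - (r%:~R)^-1 * p.1) &&
     (3%:R * (r%:~R) ^+ 2 * p.1 ^+ 4 - 6%:R * r%:~R * p.1 ^+ 2 - 1 == 0)).
Proof.
case: p => x y; rewrite core3 //; last first.
  by rewrite /Ar oppr_eq0 invr_eq0 hr0.
rewrite /= /Ar mulNr; congr andb.
have hr2 : (r%:~R : K) ^+ 2 != 0 by rewrite expf_neq0 // hr0.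
set Z := (3%:R * x ^+ 4 + _ - _).
have eZ : 3%:R * (r%:~R) ^+ 2 * x ^+ 4 - 6%:R * r%:~R * x ^+ 2 - 1 = (r%:~R : K) ^+ 2 * Z.
  rewrite /Z; field; exact: hr0.
by rewrite eZ mulf_eq0 (negbTE hr2).
Qed.

Lemma m1 (p : K * K) :
  (p.2 ^+ 2 == p.1 ^+ 3 - (r%:~R)^-1 * p.1) &&
     (3%:R * (r%:~R) ^+ 2 * p.1 ^+ 4 - 6%:R * r%:~R * p.1 ^+ 2 - 1 == 0) ->
  let q := (eps ^+ 2 * p.1, eps ^+ 3 * p.2) in
  (q.2 ^+ 2 == q.1 ^+ 3 - q.1) &&
               (3%:R * q.1 ^+ 4 - 6%:R * q.1 ^+ 2 - 1 == 0).
Proof.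
case: p => a b /= /andP [/eqP h1 /eqP h4]; apply/andP; split; apply/eqP.
  rewrite exprMn h1 hre; field; exact: heps.
apply: etrans _ h4; rewrite hre; ring.
Qed.

Lemma m1' (p : K * K) :
  (p.2 ^+ 2 == p.1 ^+ 3 - p.1) &&
               (3%:R * p.1 ^+ 4 - 6%:R * p.1 ^+ 2 - 1 == 0) ->
  let q := (p.1 / eps ^+ 2, p.2 / eps ^+ 3) in
  (q.2 ^+ 2 == q.1 ^+ 3 - (r%:~R)^-1 * q.1) &&
     (3%:R * (r%:~R) ^+ 2 * q.1 ^+ 4 - 6%:R * r%:~R * q.1 ^+ 2 - 1 == 0).
Proof.
case: p => a b /= /andP [/eqP h1 /eqP h4]; apply/andP; split; apply/eqP.
  rewrite exprMn h1 hre; field; exact: heps.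
apply: etrans _ h4; rewrite hre; field; exact: heps.
Qed.

Lemma m2 (p : K * K) :
  (p.2 ^+ 2 == p.1 ^+ 3 - p.1) &&
               (3%:R * p.1 ^+ 4 - 6%:R * p.1 ^+ 2 - 1 == 0) ->
  let q := (- 1 / p.1, p.2 / p.1 ^+ 2) in
  (q.2 ^+ 2 == q.1 ^+ 3 - q.1) &&
               (q.1 ^+ 4 + 6%:R * q.1 ^+ 2 - 3%:R == 0).
Proof.
case: p => a b /= /andP [/eqP h1 /eqP h4].
have a0 : a != 0.
  apply/negP => /eqP a0; move: h4; rewrite a0 !expr0n /= !mulr0 !sub0r => /eqP.
  by rewrite oppr0 sub0r oppr_eq0 oner_eq0.
apply/andP; split; apply/eqP.
  rewrite exprMn h1; field; exact: a0.
apply: etrans (_ : - (3%:R * a ^+ 4 - 6%:R * a ^+ 2 - 1) / a ^+ 4 = 0).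
  field; exact: a0.
by rewrite h4 oppr0 mul0r.
Qed.

Lemma m2' (p : K * K) :
  (p.2 ^+ 2 == p.1 ^+ 3 - p.1) &&
               (p.1 ^+ 4 + 6%:R * p.1 ^+ 2 - 3%:R == 0) ->
  let q := (- 1 / p.1, p.2 / p.1 ^+ 2) in
  (q.2 ^+ 2 == q.1 ^+ 3 - q.1) &&
               (3%:R * q.1 ^+ 4 - 6%:R * q.1 ^+ 2 - 1 == 0).
Proof.
case: p => a b /= /andP [/eqP h1 /eqP h4].
have a0 : a != 0.
  apply/negP => /eqP a0; move: h4; rewrite a0 !expr0n /= !mulr0 !add0r => /eqP.
  move/eqP => H; have : (3%:R : K) = - - 3%:R by rewrite opprK.
  by rewrite H oppr0 => /eqP; rewrite (negbTE h3).
apply/andP; split; apply/eqP.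
  rewrite exprMn h1; field; exact: a0.
apply: etrans (_ : - (a ^+ 4 + 6%:R * a ^+ 2 - 3%:R) / a ^+ 4 = 0).
  field; exact: a0.
by rewrite h4 oppr0 mul0r.
Qed.

End Aux.

Lemma s0_nz (K : fieldType) (a : K) : (3%:R : K) != 0 ->
  a ^+ 4 + 6%:R * a ^+ 2 - 3%:R = 0 -> a != 0.
Proof.
move=> h3 h4; apply/negP => /eqP a0; move: h4; rewrite a0 !expr0n /= !mulr0 !add0r => /eqP.
by rewrite oppr_eq0 (negbTE h3).
Qed.

Theorem lemma3p10 (K : fieldType) (r : int) (eps : K) :
  r != 0 ->
  (forall p : nat, p \in [pchar K] -> ~~ (p %| absz (2 * r)%R)%N) ->
  3%N \notin [pchar K] ->
  (r%:~R : K) = eps ^+ 4 ->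
  exists f : E3 K r -> S1r K r, bijective f /\
  exists g : S1r K r -> S1 K, bijective g /\
  exists h : S1 K -> S0 K, bijective h.
Proof.
move=> rn0 hch h3c hre.
have h3 : (3%:R : K) != 0.
  apply/negP => h; apply/negP: h3c; by rewrite inE h.
have h2 : (2%:R : K) != 0.
  apply/negP => h; have /hch : 2%N \in [pchar K] by rewrite inE h.
  by rewrite abszM dvdn_mulr.
have hra : ((absz r)%:R : K) != 0.
  apply/negP => h.
  have rp : (0 < `|r|)%N by rewrite absz_gt0.
  have [p hp] := natf0_pchar rp h.
  move: (hch p hp); rewrite abszM dvdn_mull //.
  by rewrite (dvdn_pcharf hp).
have heps : eps != 0.
  apply/negP => /eqP e0; move: hre; rewrite e0 expr0n /= => hr.
  clear hch; move: hra; case: r rn0 hr => n _ /=.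
    by move=> hn; move/negP; apply; apply/eqP; exact: hn.
  by rewrite NegzE mulrNz => /eqP; rewrite oppr_eq0 => hn; rewrite hn.
pose f := fun p : E3 K r => (exist _ (val p) (etrans (esym (@bridge K r eps hre heps h2 (val p))) (valP p)) : S1r K r).
pose f' := fun p : S1r K r => (exist _ (val p) (etrans (@bridge K r eps hre heps h2 (val p)) (valP p)) : E3 K r).
exists f; split.
  by exists f' => p; apply: val_inj.
pose g := fun p : S1r K r => (exist _ (eps ^+ 2 * (val p).1, eps ^+ 3 * (val p).2) (@m1 K r eps hre heps _ (valP p)) : S1 K).
pose g' := fun p : S1 K => (exist _ ((val p).1 / eps ^+ 2, (val p).2 / eps ^+ 3) (@m1' K r eps hre heps _ (valP p)) : S1r K r).
exists g; split.
  exists g' => -[[a b] Hp]; apply: val_inj => /=; congr pair; field; exact: heps.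
pose h := fun p : S1 K => (exist _ (- 1 / (val p).1, (val p).2 / (val p).1 ^+ 2) (@m2 K _ (valP p)) : S0 K).
pose h' := fun p : S0 K => (exist _ (- 1 / (val p).1, (val p).2 / (val p).1 ^+ 2) (@m2' K h3 _ (valP p)) : S1 K).
exists h; exists h'.
  move=> -[[a b] Hp]; apply: val_inj => /=.
  have a0 : a != 0.
    apply/negP => /eqP a0; move: Hp; rewrite a0 !expr0n /= !mulr0 !sub0r andbC => /andP [/eqP + _].
    by rewrite oppr0 sub0r => /eqP; rewrite oppr_eq0 oner_eq0.
  congr pair; field; rewrite ?a0 /= ?oppr_eq0 ?oner_eq0 //.
move=> -[[a b] Hp]; apply: val_inj => /=.
have a0 : a != 0.
  by case/andP: Hp => _ /eqP H4; exact: (@s0_nz K a h3 H4).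
congr pair; field; rewrite ?a0 /= ?oppr_eq0 ?oner_eq0 //.
Qed.
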